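(* For every poset $P$ and every $n\in\omega$: $P\models\psi_n$ if and only if for all $p,q\in P$ with $p\not\leq q$, $\exists$ has an $n$-strategy for the game with starting position $(\{p\},\{q\})$.
   Context: Work in the first-order signature with one binary relation $\leq$. Let $J(x,y,z)$ express that $z$ is the join of $x,y$ (namely $x\leq z\wedge y\leq z\wedge\forall w((x\leq w\wedge y\leq w)\to z\leq w)$) and $M(x,y,z)$ that $z$ is their meet. Let $C_k(x_1,\ldots,x_k,y)=\bigvee_{i=1}^k(y=x_i)$ (false for $k=0$), $D_k=\neg C_k$, $\vec{x}_m=(x_1,\ldots,x_m)$. Define $\phi_{m0}(\vec{x}_m,y)=D_m(\vec{x}_m,y)$ and $\phi_{m(n+1)}(\vec{x}_m,y)=\forall a\forall b\forall c\Big(\big(\exists d(C_m(\vec{x}_m,d)\wedge d\leq a)\to\phi_{(m+1)n}(\vec{x}_m,a,y)\big)\wedge\big((C_m(\vec{x}_m,a)\wedge C_m(\vec{x}_m,b)\wedge M(a,b,c))\to\phi_{(m+1)n}(\vec{x}_m,c,y)\big)\wedge\big((C_m(\vec{x}_m,c)\wedge J(a,b,c))\to(\phi_{(m+1)n}(\vec{x}_m,a,y)\vee\phi_{(m+1)n}(\vec{x}_m,b,y))\big)\Big)$, and $\psi_n=\forall x\forall y(\neg(x\leq y)\to\phi_{1n}(x,y))$. The game: for a poset $P$ and $U_0,V\subseteq P$, the game with starting position $(U_0,V)$ is played between $\forall$ and $\exists$ in rounds $0,1,2,\ldots$; a set $U$ is maintained, initially $U_0$, with $V$ fixed. Each round $\forall$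 moves and $\exists$ responds: (1) if $b\geq a$ for some $a\in U$, $\forall$ may play $(b)$ and $\exists$ must add $b$ to $U$; (2) if $a,b\in U$ and $a\wedge b$ exists, $\forall$ may play $(a,b)$ and $\exists$ must add $a\wedge b$; (3) if $a\vee b$ exists and lies in $U$, $\forall$ may play $(a,b)$ and $\exists$ must choose one of $a,b$ and add it to $U$. $\forall$ wins in round $n$ if $U\cap V\neq\emptyset$ at the beginning of round $n$. $\exists$ has an $n$-strategy if she can guarantee that $\forall$ does not win until at least round $n+1$. *)

(* Defs.v *)
From Stdlib Require Import List.
Import ListNotations.

Section Defs.
Variable T : Type.
Variable le : T -> T -> Prop.

Definition J (x y z : T) : Prop :=
  le x z /\ le y z /\ forall w, (le x w /\ le y w) -> le z w.

Definition M (x y z : T) : Prop :=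
  le z x /\ le z y /\ forall w, (le w x /\ le w y) -> le w z.

(* C_k(x_1,...,x_k,y) = \/_{i=1}^k (y = x_i)  (False for k = 0);
   the tuple (x_1,...,x_k) is the list xs, k = length xs. *)
Fixpoint Ck (xs : list T) (y : T) : Prop :=
  match xs with
  | [] => False
  | x :: xs' => y = x \/ Ck xs' y
  end.

Definition Dk (xs : list T) (y : T) : Prop := ~ Ck xs y.

(* Semantics of phi_{mn}(x_1..x_m, y) in the structure (T, le), with
   m = length xs; (x_1,...,x_m,a) is xs ++ [a]. *)
Fixpoint phi (n : nat) (xs : list T) (y : T) : Prop :=
  match n with
  | 0 => Dk xs y
  | S n' =>
    forall a b c : T,
      ((exists d, Ck xs d /\ le d a) -> phi n' (xs ++ [a]) y)
      /\ ((Ck xs a /\ Ck xs b /\ M a b c) -> phi n' (xs ++ [c]) y)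
      /\ ((Ck xs c /\ J a b c) -> (phi n' (xs ++ [a]) y \/ phi n' (xs ++ [b]) y))
  end.

Definition psi (n : nat) : Prop :=
  forall x y : T, ~ le x y -> phi n [x] y.

(* Moves of player forall:
   Up b      : rule (1), play (b)
   Meet a b  : rule (2), play (a,b)
   Join a b  : rule (3), play (a,b) *)
Inductive move : Type :=
| Up : T -> move
| Meet : T -> T -> move
| Join : T -> T -> move.

Definition legal (U : T -> Prop) (m : move) : Prop :=
  match m with
  | Up b => exists a, U a /\ le a b
  | Meet a b => U a /\ U b /\ exists c, M a b c
  | Join a b => exists c, J a b c /\ U c
  end.

(* For a Meet
   move the added element is the meet a /\ b (unique by antisymmetry). *)
Definition step (U : T -> Prop) (m : move) (ch : bool) : T -> Prop :=
  match m with
  | Up b => fun x => U x \/ x = b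
  | Meet a b => fun x => U x \/ M a b x
  | Join a b => fun x => U x \/ x = (if ch then a else b)
  end.

(* A strategy for exists: given the history of previous moves of forall
   (most recent first) and the current move, her choice (only relevant
   for rule (3) moves). *)
Definition strategy : Type := list move -> move -> bool.

Fixpoint run (sigma : strategy) (U0 : T -> Prop) (h : list move) : T -> Prop :=
  match h with
  | [] => U0
  | m :: h' => step (run sigma U0 h') m (sigma h' m)
  end.

Fixpoint legal_hist (sigma : strategy) (U0 : T -> Prop) (h : list move) : Prop :=
  match h with
  | [] => True
  | m :: h' => legal_hist sigma U0 h' /\ legal (run sigma U0 h') m
  end.

(* sigma is an n-strategy for the game with starting position (U0, V):
   at the beginning of each round k <= n (i.e. after any legal history of
   k moves), U /\ V is empty, so forall does not win before round n+1. *)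
Definition is_n_strategy (n : nat) (U0 V : T -> Prop) (sigma : strategy) : Prop :=
  forall h : list move, legal_hist sigma U0 h -> length h <= n ->
    forall x, run sigma U0 h x -> ~ V x.

Definition has_n_strategy (n : nat) (U0 V : T -> Prop) : Prop :=
  exists sigma : strategy, is_n_strategy n U0 V sigma.

End Defs.

Arguments Up {T}.
Arguments Meet {T}.
Arguments Join {T}.

(* Main.v *)
Require Import Defs.
From Stdlib Require Import List Arith Lia ClassicalEpsilon.
Import ListNotations.

Definition addS {T : Type} (U : T -> Prop) (a : T) : T -> Prop := fun x => U x \/ x = a.

Fixpoint Phi {T : Type} (le : T -> T -> Prop) (n : nat) (U : T -> Prop) (y : T) : Prop :=
  match n with
  | 0 => ~ U y
  | S n' => forall a b c : T,
      ((exists d, U d /\ le d a) -> Phi le n' (addS U a) y)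
      /\ ((U a /\ U b /\ M T le a b c) -> Phi le n' (addS U c) y)
      /\ ((U c /\ J T le a b c) -> (Phi le n' (addS U a) y \/ Phi le n' (addS U b) y))
  end.

Lemma Phi_ext {T} (le : T -> T -> Prop) n : forall (U V : T -> Prop) y,
  (forall x, U x <-> V x) -> Phi le n U y -> Phi le n V y.
Proof.
  induction n as [|n IH]; simpl; intros U V y E H.
  - intro Hv; apply H, E, Hv.
  - intros a b c; destruct (H a b c) as [H1 [H2 H3]]; repeat split.
    + intros [d [Hd Hl]]. apply (IH (addS U a)).
      { unfold addS; intro x; rewrite E; tauto. }
      apply H1; exists d; split; [apply E|]; auto.
    + intros [Ha [Hb Hm]]. apply (IH (addS U c)).
      { unfold addS; intro x; rewrite E; tauto. }
      apply H2; split; [apply E; exact Ha|split; [apply E; exact Hb|exact Hm]].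
    + intros [Hc Hj]. destruct (H3 (conj (proj2 (E c) Hc) Hj)) as [X|X];
      [left|right]; (eapply IH; [|exact X]); unfold addS; intro x; rewrite E; tauto.
Qed.

Lemma Ck_app {T} (xs : list T) a z : Ck T (xs ++ [a]) z <-> addS (Ck T xs) a z.
Proof.
  unfold addS; induction xs; simpl; tauto.
Qed.

Lemma phi_Phi {T} (le : T -> T -> Prop) n : forall xs y,
  phi T le n xs y <-> Phi le n (Ck T xs) y.
Proof.
  induction n as [|n IH]; simpl; intros xs y.
  - unfold Dk; tauto.
  - split; intros H a b c; destruct (H a b c) as [H1 [H2 H3]]; repeat split.
    + intro X; eapply Phi_ext; [|apply IH, H1, X]. intro; apply Ck_app.
    + intro X; eapply Phi_ext; [|apply IH, H2, X]. intro; apply Ck_app.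
    + intro X; destruct (H3 X) as [Y|Y]; [left|right]; (eapply Phi_ext; [|apply IH, Y]);
      intro; apply Ck_app.
    + intro X; apply IH; eapply Phi_ext; [|apply H1, X]. intro; symmetry; apply Ck_app.
    + intro X; apply IH; eapply Phi_ext; [|apply H2, X]. intro; symmetry; apply Ck_app.
    + intro X; destruct (H3 X) as [Y|Y]; [left|right]; apply IH; (eapply Phi_ext; [|apply Y]);
      intro; symmetry; apply Ck_app.
Qed.

Lemma Phi_notin {T} (le : T -> T -> Prop) (le_refl : forall x, le x x) k :
  forall U y d, U d -> Phi le k U y -> ~ U y.
Proof.
  induction k as [|k IH]; simpl; intros U y d Hd H.
  - exact H.
  - destruct (H d d d) as [H1 _].
    intro Hy. apply (IH (addS U d) y d); [right; reflexivity| |left; exact Hy].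
    apply H1; exists d; auto.
Qed.

Lemma M_uniq {T} (le : T -> T -> Prop)
  (le_antisym : forall x y, le x y -> le y x -> x = y) a b c x :
  M T le a b c -> M T le a b x -> x = c.
Proof.
  unfold M; intros [h1 [h2 h3]] [g1 [g2 g3]]. apply le_antisym; auto.
Qed.

Definition chf {T} (le : T -> T -> Prop) (n : nat) (q : T) (U : T -> Prop) (len : nat) (m : move T) : bool :=
  match m with
  | Join a b => if excluded_middle_informative (Phi le (n - S len) (addS U a) q) then true else false
  | _ => true
  end.

Fixpoint R {T} (le : T -> T -> Prop) (n : nat) (q : T) (U0 : T -> Prop) (h : list (move T)) : T -> Prop :=
  match h with
  | [] => U0
  | m :: h' => step T le (R le n q U0 h') m (chf le n q (R le n q U0 h') (length h') m)
  end.

Definition sig {T} (le : T -> T -> Prop) (n : nat) (q : T) (U0 : T -> Prop) : strategy T :=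
  fun h m => chf le n q (R le n q U0 h) (length h) m.

Lemma run_R {T} (le : T -> T -> Prop) n q U0 h :
  run T le (sig le n q U0) U0 h = R le n q U0 h.
Proof.
  induction h as [|m h IH]; simpl; auto. rewrite IH. reflexivity.
Qed.

Theorem proposition4p2 (T : Type) (le : T -> T -> Prop)
  (le_refl : forall x, le x x)
  (le_antisym : forall x y, le x y -> le y x -> x = y)
  (le_trans : forall x y z, le x y -> le y z -> le x z)
  (n : nat) :
  psi T le n <->
  (forall p q : T, ~ le p q ->
     has_n_strategy T le n (fun x => x = p) (fun x => x = q)).
Proof.
  split.
  - intros Hpsi p q Hpq.
    assert (H0 : Phi le n (fun x => x = p) q).
    { eapply Phi_ext; [|apply phi_Phi, Hpsi, Hpq]. intro; simpl; tauto. }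
    set (U0 := fun x : T => x = p).
    assert (Hp : forall h, R le n q U0 h p).
    { induction h as [|m h IH]; simpl. reflexivity.
      destruct m; simpl; left; auto. }
    assert (Inv : forall h, legal_hist T le (sig le n q U0) U0 h -> length h <= n ->
                  Phi le (n - length h) (R le n q U0 h) q).
    { induction h as [|m h IH]; simpl; intros Hl Hlen.
      - rewrite Nat.sub_0_r; exact H0.
      - destruct Hl as [Hl Hlg]. rewrite run_R in Hlg.
        specialize (IH Hl ltac:(lia)).
        replace (n - length h) with (S (n - S (length h))) in IH by lia.
        simpl in IH. destruct m as [b|a b|a b]; simpl.
        + destruct (IH b b b) as [H1 _]. apply H1. exact Hlg.
        + destruct Hlg as [Ha [Hb [c Hc]]].
          destruct (IH a b c) as [_ [H2 _]].
          eapply Phi_ext; [|apply H2; auto].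
          unfold addS; intro x; split; (intros [X|X]; [left; auto|right]).
          * subst x; exact Hc.
          * eapply M_uniq; eauto.
        + destruct Hlg as [c [Hj Hc]].
          destruct (IH a b c) as [_ [_ H3]].
          destruct (excluded_middle_informative _) as [Y|Y].
          * exact Y.
          * destruct (H3 (conj Hc Hj)) as [Z|Z]; [contradiction|exact Z]. }
    exists (sig le n q U0). intros h Hl Hlen x Hx Hq. subst x.
    rewrite run_R in Hx.
    apply (Phi_notin le le_refl (n - length h) (R le n q U0 h) q p (Hp h) (Inv h Hl Hlen) Hx).
  - intros Hs x y Hxy. apply phi_Phi.
    destruct (Hs x y Hxy) as [sigma Hsig].
    set (U0 := fun z : T => z = x).
    assert (G : forall k h, legal_hist T le sigma U0 h -> length h + k <= n ->
                Phi le k (run T le sigma U0 h) y).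
    { induction k as [|k IH]; simpl; intros h Hl Hlen.
      - intro Hy. apply (Hsig h Hl ltac:(lia) y Hy). reflexivity.
      - intros a b c; repeat split.
        + intro Hd. apply (IH (Up a :: h)); simpl; [split; auto|lia].
        + intros [Ha [Hb Hm]].
          eapply Phi_ext; [|apply (IH (Meet a b :: h)); simpl; [split; [auto|repeat split; eauto]|lia]].
          simpl. unfold addS; intro z; split; (intros [X|X]; [left; auto|right]).
          * eapply M_uniq; eauto.
          * subst z; exact Hm.
        + intros [Hc Hj].
          assert (Z := IH (Join a b :: h) (conj Hl (ex_intro _ c (conj Hj Hc))) ltac:(simpl; lia)).
          simpl in Z. destruct (sigma h (Join a b)); [left|right]; exact Z. }
    eapply Phi_ext; [|apply (G n []); simpl; auto].
    intro z; simpl; unfold U0; tauto.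
Qed.
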